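(* Let $m_0 = -468$ and $C_0 = -4330$, and let $P = 2^3\cdot 3\cdot 5\cdot 7\cdot 11\cdot 13\cdot 31\cdot 433\cdot 2017\cdot 3253\cdot 8501\cdot 32687\cdot 46649\cdot 4057231$. For $k\in\mathbb{Z}$, let $\mathcal{U}_k$ be the affine scheme over $\mathbb{Z}$ defined by $$(x^2-36)(y^2-36)(z^2-36) - m_0(xyz+C_0)^2 - k = 0.$$ If $k>0$ and $k\equiv 1\pmod P$, then $\mathcal{U}_k(\mathbf{A}_{\mathbb{Z}})\neq\emptyset$.
   Context: For an affine scheme $\mathcal{U}$ of finite type over $\mathbb{Z}$, $\mathcal{U}(\mathbf{A}_{\mathbb{Z}}) = \mathcal{U}(\mathbb{R})\times\prod_{p} \mathcal{U}(\mathbb{Z}_p)$, the product over all primes $p$. Thus the claim is that the equation has a real solution and a solution in $\mathbb{Z}_p^3$ for every prime $p$. *)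

(* Defs.v *)
From mathcomp Require Import all_boot all_order all_algebra.
From mathcomp Require Import reals.
Set Implicit Arguments. Unset Strict Implicit. Unset Printing Implicit Defensive.
Import Order.TTheory GRing.Theory Num.Theory.
Local Open Scope ring_scope.

Definition m0 : int := - 468.
Definition C0 : int := - 4330.

Definition P : int :=
  (2 ^ 3 * 3 * 5 * 7 * 11 * 13 * 31 * 433 * 2017 * 3253 * 8501
     * 32687 * 46649 * 4057231)%N%:Z.

Definition Fk (R : comNzRingType) (k : int) (x y z : R) : R :=
  (x ^+ 2 - 36) * (y ^+ 2 - 36) * (z ^+ 2 - 36)
  - m0%:~R * (x * y * z + C0%:~R) ^+ 2 - k%:~R.

(* A p-adic integer, as an element of the inverse limit Z_p = lim Z/p^n Z:
   a sequence of integers a n (representing a class mod p^n) with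
   a (n+1) = a n mod p^n. *)
Definition padic_int (p : nat) (a : nat -> int) : Prop :=
  forall n : nat, (a n.+1 == a n %[mod (p ^ n)%N%:Z])%Z.

(* A Z_p-point of U_k: a triple of p-adic integers at which the polynomial
   vanishes in Z_p, i.e. in every component Z/p^n Z of the inverse limit
   (ring operations on the inverse limit are componentwise). *)
Definition Zp_point (p : nat) (k : int) : Prop :=
  exists x y z : nat -> int,
    [/\ padic_int p x, padic_int p y, padic_int p z &
        forall n : nat, ((p ^ n)%N%:Z %| Fk k (x n) (y n) (z n))%Z].

Definition real_point (R : realType) (k : int) : Prop :=
  exists x y z : R, Fk k x y z = 0.

(* Main.v *)
Require Import Defs.
From mathcomp Require Import all_boot all_order all_algebra.
From mathcomp Require Import reals.
From mathcomp Require Import ring.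
Import Order.TTheory GRing.Theory Num.Theory.
Local Open Scope ring_scope.

Lemma PXE (p n : nat) : (p ^ n)%N%:Z = (p%:Z) ^+ n.
Proof. by rewrite -!natz natrX. Qed.

Section H.
Variables (q A B C : int) (e : nat) (a u v : int).
Let f z := A * z ^+ 2 + B * z + C.
Let f' z := 2 * A * z + B.
Hypothesis H1 : (q ^+ (2 * e + 1) %| f a)%Z.
Hypothesis H2 : f' a = q ^+ e * u.
Hypothesis H3 : (q %| u * v - 1)%Z.

Fixpoint seqa (m : nat) : int :=
  match m with
  | 0 => a
  | m'.+1 => seqa m' - q ^+ (e + 1 + m') * ((f (seqa m') %/ q ^+ (2 * e + 1 + m'))%Z * v)
  end.

Lemma seqa_inv m : (q ^+ (2 * e + 1 + m) %| f (seqa m))%Z /\ (q ^+ (e + 1) %| f' (seqa m) - f' a)%Z.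
Proof.
elim: m => [|m [IH1 IH2]] /=.
  by rewrite addn0 H1 subrr dvdz0.
set r := (f (seqa m) %/ q ^+ (2 * e + 1 + m))%Z.
have Er : f (seqa m) = r * q ^+ (2 * e + 1 + m) by rewrite divzK.
have [w Ew] := dvdzP IH2.
have [s Es] := dvdzP H3.
move: Er Ew Es; rewrite H2 /f' /f.
have -> : (2 * e + 1 + m = e + e + 1 + m)%N by rewrite mul2n addnn.
rewrite !exprD !expr1 => Er Ew Es.
split.
  apply/dvdzP; exists (- r * s - r * v * w + A * q ^+ m * r ^+ 2 * v ^+ 2).
  idtac.
  have Eu : u * v = s * q + 1 by rewrite -Es; ring.
  set a0 := seqa m in Er Ew *.
  have Ef' : 2 * A * a0 + B = w * (q ^+ e * q) + q ^+ e * u by rewrite -Ew; ring.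
  transitivity (A * a0 ^+ 2 + B * a0 + C - q ^+ e * q * q ^+ m * (r * v) * (2 * A * a0 + B) + A * (q ^+ e * q * q ^+ m * (r * v)) ^+ 2).
    ring.
  rewrite Er Ef'.
  transitivity (r * (q ^+ e * q ^+ e * q * q ^+ m) * (1 - u * v) - q ^+ e * q * q ^+ m * (r * v) * (w * (q ^+ e * q)) + A * (q ^+ e * q * q ^+ m * (r * v)) ^+ 2).
    ring.
  rewrite Eu. rewrite !exprS !expr0; ring.
apply/dvdzP; exists (w + 2 * A * q ^+ m * (- r * v)).
set a0 := seqa m in Ew *.
transitivity ((2 * A * a0 + B - q ^+ e * u) + 2 * A * (- q ^+ e * q * q ^+ m * (r * v))).
  ring.
rewrite Ew; ring.
Qed.

End H.

Lemma hensel (p : nat) (A B C : int) (e : nat) (a u v : int) :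
  ((p%:Z) ^+ (2 * e + 1) %| A * a ^+ 2 + B * a + C)%Z ->
  2 * A * a + B = (p%:Z) ^+ e * u -> (p%:Z %| u * v - 1)%Z ->
  exists z : nat -> int, padic_int p z /\
    forall n, ((p ^ n)%N%:Z %| A * z n ^+ 2 + B * z n + C)%Z.
Proof.
move=> H1 H2 H3; exists (seqa p%:Z A B C e a v); split.
  move=> n; rewrite eqz_mod_dvd /= PXE.
  set t := (_ * v).
  have -> : seqa p A B C e a v n - p%:Z ^+ (e + 1 + n) * t - seqa p A B C e a v n
     = - (p%:Z ^+ (e + 1) * t) * p%:Z ^+ n by rewrite exprD; ring.
  exact: dvdz_mull (dvdzz _).
move=> n; have [I1 _] := @seqa_inv _ _ _ _ _ _ _ _ H1 H2 H3 n.
rewrite PXE; apply: dvdz_trans I1.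
rewrite [X in (_ %| X)%Z]exprD addnC exprD; exact: dvdz_mull (dvdzz _).
Qed.

Definition Aq (x y : int) : int := (x ^+ 2 - 36) * (y ^+ 2 - 36) + 468 * x ^+ 2 * y ^+ 2.
Definition Bq (x y : int) : int := - (936 * 4330) * x * y.
Definition Cq (k x y : int) : int :=
  - 36 * ((x ^+ 2 - 36) * (y ^+ 2 - 36)) + 468 * 4330 * 4330 - k.

Lemma Fk_quad k x y z : Fk k x y z = Aq x y * z ^+ 2 + Bq x y * z + Cq k x y.
Proof. rewrite /Fk /Aq /Bq /Cq /m0 /C0 !intz; ring. Qed.

Lemma hensel_F (p : nat) (k x y a : int) (e : nat) (u v : int) :
  ((p%:Z) ^+ (2 * e + 1) %| Aq x y * a ^+ 2 + Bq x y * a + Cq k x y)%Z ->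
  2 * Aq x y * a + Bq x y = (p%:Z) ^+ e * u -> (p%:Z %| u * v - 1)%Z ->
  Zp_point p k.
Proof.
move=> H1 H2 H3; have [z [Hz Hn]] := @hensel _ _ _ _ _ _ _ _ H1 H2 H3.
exists (fun _ => x), (fun _ => y), z; split => //.
by move=> n; rewrite Fk_quad.
Qed.

Lemma special (p : nat) (k : int) (e : nat) (x y a W u v s : int) :
  (((p%:Z) ^+ (2 * e + 1)) %| k - 1)%Z ->
  Aq x y * a ^+ 2 + Bq x y * a + Cq 1 x y = (p%:Z) ^+ (2 * e + 1) * W ->
  2 * Aq x y * a + Bq x y = (p%:Z) ^+ e * u ->
  u * v - 1 = s * p%:Z ->
  Zp_point p k.
Proof.
move=> Hk E1 E2 E3; apply: (@hensel_F p k x y a e u v) => //.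
  have -> : Aq x y * a ^+ 2 + Bq x y * a + Cq k x y =
     (Aq x y * a ^+ 2 + Bq x y * a + Cq 1 x y) - (k - 1) by rewrite /Cq; ring.
  by rewrite E1 rpredB // dvdz_mulr.
by rewrite E3 dvdz_mull.
Qed.

Lemma sp2 k : ((2%:Z) ^+ (2 * 1 + 1) %| k - 1)%Z -> Zp_point 2 k.
Proof.
move=> Hk; apply: (@special 2 k 1 1 1 1 (((1 * 1000 + 96) * 1000 + 298) * 1000 + 739) (- ((2 * 1000 + 24) * 1000 + 747)) 1 (- ((1 * 1000 + 12) * 1000 + 374))) ; [exact: Hk| | | ].
 all: rewrite /Aq /Bq /Cq; ring.
Qed.

Lemma sp3 k : ((3%:Z) ^+ (2 * 0 + 1) %| k - 1)%Z -> Zp_point 3 k.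
Proof.
move=> Hk; apply: (@special 3 k 0 1 1 1 (((2 * 1000 + 923) * 1000 + 463) * 1000 + 304) (- ((4 * 1000 + 49) * 1000 + 494)) 2 (- ((2 * 1000 + 699) * 1000 + 663))); [exact: Hk| | | ].
 all: rewrite /Aq /Bq /Cq; ring.
Qed.

Lemma sp5 k : ((5%:Z) ^+ (2 * 0 + 1) %| k - 1)%Z -> Zp_point 5 k.
Proof.
move=> Hk; apply: (@special 5 k 0 0 2 2 (((1 * 1000 + 754) * 1000 + 889) * 1000 + 667) (4 * 1000 + 608) 2 (1 * 1000 + 843)); [exact: Hk| | | ].
 all: rewrite /Aq /Bq /Cq; ring.
Qed.

Lemma sp13 k : ((13%:Z) ^+ (2 * 0 + 1) %| k - 1)%Z -> Zp_point 13 k.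
Proof.
move=> Hk; apply: (@special 13 k 0 0 1 3 ((674 * 1000 + 957) * 1000 + 783) (7 * 1000 + 560) 2 (1 * 1000 + 163)); [exact: Hk| | | ].
 all: rewrite /Aq /Bq /Cq; ring.
Qed.

Lemma sp433 k : ((433%:Z) ^+ (2 * 0 + 1) %| k - 1)%Z -> Zp_point 433 k.
Proof.
move=> Hk; apply: (@special 433 k 0 0 1 76 ((20 * 1000 + 281) * 1000 + 103) (191 * 1000 + 520) 391 (172 * 1000 + 943)); [exact: Hk| | | ].
 all: rewrite /Aq /Bq /Cq; ring.
Qed.

Lemma inv_mod (p : nat) (b : int) : prime p -> ~~ (p %| `|b|)%N ->
  exists w : int, (p%:Z %| b * w - 1)%Z.
Proof.
move=> pp nd.
have cp : coprimez p%:Z b by rewrite coprimezE /= prime_coprime.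
have [[u w] /= E] := coprimezP _ _ cp.
exists w; apply/dvdzP; exists (- u); rewrite -E; ring.
Qed.

Lemma ndvd_prime (p q : nat) : prime p -> prime q -> p != q -> ~~ (p %| q)%N.
Proof. by move=> pp pq; rewrite dvdn_prime2. Qed.

Lemma generic (p : nat) (k : int) : prime p ->
  p \notin [:: 2; 3; 5; 13; 433]%N -> Zp_point p k.
Proof.
move=> pp; rewrite !inE !negb_or => /and5P[n2 n3 n5 n13 n433].
have [i Hi] : exists i : int, (p%:Z %| 25 * i - 1)%Z.
  apply: (@inv_mod p _ pp).
  have -> : `|25 : int|%N = (5 ^ 2)%N by [].
  by rewrite Euclid_dvdX // andbT ndvd_prime.
have [j Hj] : exists j : int,
    (p%:Z %| (2 ^+ 7 * 3 ^+ 4 * 5 * 13 * 433) * j - 1)%Z.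
  apply: (@inv_mod p _ pp).
  rewrite !abszM /= !Euclid_dvdM //.
  by rewrite !negb_or !ndvd_prime.
set y0 : int := 6 * i.
set A := Aq 12 y0; set B := Bq 12 y0; set C := Cq k 12 y0.
set v : int := - 25 * j.
set z0 : int := - C * v.
have HA : (p%:Z %| A)%Z.
  have -> : A = (25 * i - 1) * (3888 * (25 * i + 1)) by rewrite /A /Aq /y0; ring.
  exact: dvdz_mulr.
have HB : (p%:Z %| B * v - 1)%Z.
  have -> : B * v - 1 = (25 * i - 1) * ((2 ^+ 7 * 3 ^+ 4 * 5 * 13 * 433) * j)
     + ((2 ^+ 7 * 3 ^+ 4 * 5 * 13 * 433) * j - 1).
    by rewrite /B /Bq /v /y0; ring.
  by apply: rpredD => //; apply: dvdz_mulr.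
apply: (@hensel_F p k 12 y0 z0 0 (2 * A * z0 + B) v).
- have -> : A * z0 ^+ 2 + B * z0 + C = A * z0 ^+ 2 - C * (B * v - 1)
    by rewrite /z0; ring.
  rewrite expr1; apply: rpredB; first exact: dvdz_mulr.
  exact: dvdz_mull.
- by rewrite expr0 mul1r.
- have -> : (2 * A * z0 + B) * v - 1 = A * (2 * z0 * v) + (B * v - 1) by ring.
  by apply: rpredD => //; apply: dvdz_mulr.
Qed.

Lemma dP (d : nat) (k : int) : (d %| 2 ^ 3 * 3 * 5 * 7 * 11 * 13 * 31 * 433 * 2017 * 3253 * 8501 * 32687 * 46649 * 4057231)%N ->
  (k == 1 %[mod P])%Z -> (d%:Z %| k - 1)%Z.
Proof.
move=> hd; rewrite eqz_mod_dvd => H; apply: (dvdz_trans _ H).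
rewrite dvdzE; exact: hd.
Qed.

Lemma real_pt (R : realType) (k : int) : 0 < k -> real_point R k.
Proof.
move=> k0.
have k0' : 0 <= (k%:~R : R) / 468 by rewrite divr_ge0 // ler0z ltW.
set s := Num.sqrt ((k%:~R : R) / 468).
have hs : s ^+ 2 = (k%:~R : R) / 468 by rewrite sqr_sqrtr.
exists ((4330 + s) / 6), 1, 6.
rewrite /Fk /m0 /C0.
have -> : ((((4330 + s) / 6) ^+ 2 - 36) * (1 ^+ 2 - 36) * (6 ^+ 2 - 36) -
  (- 468 : int)%:~R * ((4330 + s) / 6 * 1 * 6 + (- 4330 : int)%:~R) ^+ 2 - k%:~R : R)
  = 468 * s ^+ 2 - k%:~R by field.
rewrite hs mulrC divfK; [exact: subrr | by rewrite pnatr_eq0].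
Qed.

Theorem proposition5p1 (R : realType) (k : int) :
  0 < k -> (k == 1 %[mod P])%Z ->
  real_point R k /\ (forall p : nat, prime p -> Zp_point p k).
Proof.
move=> k0 hk; split; first exact: real_pt.
move=> p pp.
case: (boolP (p \in [:: 2; 3; 5; 13; 433]%N)) => [|hg]; last exact: generic.
rewrite !inE.
case/orP => [/eqP-> | ]; first (apply: sp2; rewrite -PXE; apply: (@dP (2 ^ 3) k _ hk);
  do 13 apply: dvdn_mulr; exact: dvdnn).
case/orP => [/eqP-> | ]; first (apply: sp3; rewrite -PXE; apply: (@dP (3) k _ hk);
  do 12 apply: dvdn_mulr; apply: dvdn_mull; exact: dvdnn).
case/orP => [/eqP-> | ]; first (apply: sp5; rewrite -PXE; apply: (@dP (5) k _ hk);
  do 11 apply: dvdn_mulr; apply: dvdn_mull; exact: dvdnn).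
case/orP => [/eqP-> | /eqP->].
  apply: sp13; rewrite -PXE; apply: (@dP (13) k _ hk);
  do 8 apply: dvdn_mulr; apply: dvdn_mull; exact: dvdnn.
apply: sp433; rewrite -PXE; apply: (@dP (433) k _ hk);
do 6 apply: dvdn_mulr; apply: dvdn_mull; exact: dvdnn.
Qed.
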